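(* Let $\mathcal{G}$ be a connected undirected graph on $\{1,\ldots,N\}$ with Laplacian $L$, fix a leader $l\in\{1,\ldots,N\}$, an integer $d\ge1$ and gains $k_p>0$, $k_u>0$. Let $L_l$ be $L$ with its $l$-th row replaced by zeros, $G_l=-(L_l\otimes I_d)\in\mathbb{R}^{Nd\times Nd}$, and let $M_l$ be $L_l$ with its $l$-th row and column deleted; let $\lambda_{2,l}=\min\sigma(M_l)$. Consider the linear system $$\dot{\boldsymbol e}=\begin{pmatrix}k_pG_l&0&I_{Nd}\\0&k_pG_l&k_uG_l\\0&0&k_uG_l\end{pmatrix}\boldsymbol e,\qquad \boldsymbol e=(\boldsymbol e_{\boldsymbol p}^T\ \boldsymbol e_{\boldsymbol v}^T\ \boldsymbol e_{\hat{\boldsymbol u}}^T)^T,\ \boldsymbol e_{\boldsymbol p},\boldsymbol e_{\boldsymbol v},\boldsymbol e_{\hat{\boldsymbol u}}\in\mathbb{R}^{Nd},$$ on the (invariant) set of error vectors whose $l$-th $d$-dimensional blocks $\boldsymbol e_{\boldsymbol p,l},\boldsymbol e_{\boldsymbol v,l},\boldsymbol e_{\hat{\boldsymbol u},l}$ are zero. Then the origin is globally asymptotically stable for this system, for any $k_p>0$, $k_u>0$. Moreover, the rates of convergence of $(\boldsymbol e_{\boldsymbol p},\boldsymbol e_{\boldsymbol v})$ and of $\boldsymbol e_{\hat{\boldsymbol u}}$ are dictated by $-k_p\lambda_{2,l}$ and $-k_u\lambda_{2,l}$, respectively, where $\lambda_{2,l}$ is the smallest positive eigenvalue of $L_l$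.
   Context: This is the free-evolution ($\dot{\boldsymbol u}_r\equiv 0$) error dynamics of a first-order leader-follower multi-agent scheme: agents $\dot{\boldsymbol p}_i=\hat{\boldsymbol u}_i-k_p\sum_{j\in\mathcal N_i}((\boldsymbol p_i-\boldsymbol p_j)-(\boldsymbol d_i-\boldsymbol d_j))$ for $i\ne l$, $\dot{\boldsymbol p}_l=\boldsymbol u_r$, estimator $\dot{\hat{\boldsymbol u}}_i=-k_u\sum_{j\in\mathcal N_i}(\hat{\boldsymbol u}_i-\hat{\boldsymbol u}_j)$ for $i\ne l$, $\hat{\boldsymbol u}_l=\boldsymbol u_r$, with errors $\boldsymbol e_{\boldsymbol p}=(\boldsymbol p-\mathbf 1\otimes\boldsymbol p_l)-(\boldsymbol d-\mathbf 1\otimes\boldsymbol d_l)$, $\boldsymbol e_{\boldsymbol v}=\dot{\boldsymbol p}-\mathbf 1\otimes\boldsymbol u_r$, $\boldsymbol e_{\hat{\boldsymbol u}}=\hat{\boldsymbol u}-\mathbf 1\otimes\boldsymbol u_r$; by construction their $l$-th blocks vanish. $L=\mathrm{diag}(A\mathbf 1)-A$ with $A$ the adjacency matrix; $\sigma(\cdot)$ is the spectrum; $M_l$ is symmetric positive definite and $\sigma(L_l)=\sigma(M_l)\cup\{0\}$. *)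

(* Defs.v *)
From HB Require Import structures.
From mathcomp Require Import all_boot all_order all_algebra.
From mathcomp Require Import mxtens.
From mathcomp Require Import all_classical all_reals all_analysis.

Set Implicit Arguments.
Unset Strict Implicit.
Unset Printing Implicit Defensive.

Import Order.TTheory GRing.Theory Num.Theory.
Local Open Scope ring_scope.

Section Defs.
Variable R : realType.

Definition adjacency N (e : rel 'I_N) : 'M[R]_N := \matrix_(i, j) (e i j)%:R.

Definition laplacian N (A : 'M[R]_N) : 'M[R]_N :=
  diag_mx (\row_i \sum_j A i j) - A.

Definition zero_row N (l : 'I_N) (L : 'M[R]_N) : 'M[R]_N :=
  \matrix_(i, j) (if i == l then 0 else L i j).

(* G_l = -(L_l (x) I_d); the Kronecker product is mxtens's tensmx,
   index (i,k) of R^{Nd} is  mxtens_index (i,k) = i*d + k *)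
Definition Gmat N d (l : 'I_N) (L : 'M[R]_N) : 'M[R]_(N * d) :=
  - (tensmx (zero_row l L) (1%:M : 'M[R]_d)).

Definition Mmat n (l : 'I_n.+1) (L : 'M[R]_n.+1) : 'M[R]_n :=
  row' l (col' l (zero_row l L)).

Definition sysmat m (kp ku : R) (G : 'M[R]_m) : 'M[R]_(m + (m + m)) :=
  block_mx (kp *: G) (row_mx 0 1%:M)
           0         (block_mx (kp *: G) (ku *: G) 0 (ku *: G)).

Definition e_p m (x : 'cV[R]_(m + (m + m))) : 'cV[R]_m := usubmx x.
Definition e_v m (x : 'cV[R]_(m + (m + m))) : 'cV[R]_m := usubmx (dsubmx x).
Definition e_u m (x : 'cV[R]_(m + (m + m))) : 'cV[R]_m := dsubmx (dsubmx x).

Definition vnorm m (v : 'cV[R]_m) : R := Num.sqrt (\sum_i v i 0 ^+ 2).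
Definition vnorm2 m (a b : 'cV[R]_m) : R := Num.sqrt (vnorm a ^+ 2 + vnorm b ^+ 2).

Definition block_zero N d (l : 'I_N) (y : 'cV[R]_(N * d)) : Prop :=
  forall k : 'I_d, y (mxtens_index (l, k)) 0 = 0.

Definition is_solution m (A : 'M[R]_m) (x : R -> 'cV[R]_m) : Prop :=
  forall (t : R) (i : 'I_m), is_derive t 1 (fun s => x s i 0) ((A *m x t) i 0).

End Defs.

(* Main.v *)
Require Import Defs.
From HB Require Import structures.
From mathcomp Require Import all_boot all_order all_algebra.
From mathcomp Require Import mxtens.
From mathcomp Require Import all_classical all_reals all_analysis.
From mathcomp Require Import ring lra.
Import Order.TTheory GRing.Theory Num.Theory.
Local Open Scope classical_set_scope.
Local Open Scope ring_scope.

Module Helpers.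
Import numFieldNormedType.Exports.
Set Implicit Arguments.
Unset Strict Implicit.
Unset Printing Implicit Defensive.


Section PartA.
Variable R : realType.

Definition dot m (u v : 'cV[R]_m) : R := \sum_i u i 0 * v i 0.

Lemma dotC m (u v : 'cV[R]_m) : dot u v = dot v u.
Proof. by apply: eq_bigr => i _; rewrite mulrC. Qed.

Lemma dotDl m (u v w : 'cV[R]_m) : dot (u + v) w = dot u w + dot v w.
Proof. by rewrite /dot -big_split; apply: eq_bigr => i _; rewrite !mxE mulrDl. Qed.

Lemma dotDr m (u v w : 'cV[R]_m) : dot w (u + v) = dot w u + dot w v.
Proof. by rewrite dotC dotDl !(dotC w). Qed.

Lemma dotZl m a (u v : 'cV[R]_m) : dot (a *: u) v = a * dot u v.
Proof. by rewrite /dot mulr_sumr; apply: eq_bigr => i _; rewrite !mxE mulrA. Qed.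

Lemma dotZr m a (u v : 'cV[R]_m) : dot u (a *: v) = a * dot u v.
Proof. by rewrite dotC dotZl dotC. Qed.

Lemma dotNl m (u v : 'cV[R]_m) : dot (- u) v = - dot u v.
Proof. by rewrite -scaleN1r dotZl mulN1r. Qed.

Lemma dotNr m (u v : 'cV[R]_m) : dot u (- v) = - dot u v.
Proof. by rewrite dotC dotNl dotC. Qed.

Lemma dot0l m (u : 'cV[R]_m) : dot 0 u = 0.
Proof. by rewrite /dot big1 // => i _; rewrite mxE mul0r. Qed.

Lemma dot0r m (u : 'cV[R]_m) : dot u 0 = 0.
Proof. by rewrite dotC dot0l. Qed.

Lemma dot_ge0 m (u : 'cV[R]_m) : 0 <= dot u u.
Proof. by apply: sumr_ge0 => i _; rewrite -expr2 sqr_ge0. Qed.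

Lemma dot_eq0 m (u : 'cV[R]_m) : dot u u = 0 -> u = 0.
Proof.
move=> h; apply/matrixP => i j; rewrite (ord1 j) mxE.
have h2 : \sum_i u i 0 ^+ 2 = 0.
  by move: h; rewrite /dot; under eq_bigr do rewrite -expr2.
have := psumr_eq0P (fun i _ => sqr_ge0 (u i 0)) h2 (i:=i) isT.
by move/eqP; rewrite sqrf_eq0 => /eqP.
Qed.

Lemma vnormE m (u : 'cV[R]_m) : vnorm u = Num.sqrt (dot u u).
Proof. by rewrite /vnorm /dot; congr Num.sqrt; apply: eq_bigr => i _; rewrite expr2. Qed.

Lemma young m (u v : 'cV[R]_m) (eps : R) : 0 < eps ->
  2 * dot u v <= eps * dot u u + eps^-1 * dot v v.
Proof.
move=> e0.
have h := dot_ge0 (eps *: u - v).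
rewrite dotDl !dotDr !dotNl !dotNr !dotZl !dotZr opprK (dotC v u) in h.
have he : eps^-1 * eps = 1 by rewrite mulVf // gt_eqF.
rewrite -(ler_pM2l e0) mulrDr !mulrA (mulrC eps (eps^-1)) he mul1r.
set a := dot u u in h *; set b := dot u v in h *; set c := dot v v in h *.
nra.
Qed.

Lemma dotMmxE m n (M : 'M[R]_(m, n)) (u : 'cV[R]_n) i :
  (M *m u) i 0 = \sum_j M i j * u j 0.
Proof. by rewrite mxE. Qed.

Lemma dot_trmx m n (M : 'M[R]_(m, n)) u v : dot u (M *m v) = dot (M^T *m u) v.
Proof.
rewrite /dot.
under eq_bigr do rewrite mxE big_distrr /=.
under [RHS]eq_bigr do rewrite mxE big_distrl /=.
rewrite exchange_big /=; apply: eq_bigr => j _; apply: eq_bigr => i _.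
by rewrite mxE mulrCA mulrA.
Qed.

End PartA.


Section PartB.
Variable R : realType.

Lemma cont_sum (T : topologicalType) (I : finType) (F : I -> T -> R) :
  (forall i, continuous (F i)) -> continuous (fun x => \sum_i F i x).
Proof.
move=> hF.
suff H : forall s : seq I, continuous (fun x => \sum_(i <- s) F i x) by exact: H.
elim=> [|i s IH].
  have -> : (fun x => \sum_(i <- [::]) F i x) = cst 0.
    by apply: funext => y; rewrite big_nil.
  exact: cst_continuous.
have -> : (fun x => \sum_(j <- i :: s) F j x) = F i + (fun x => \sum_(j <- s) F j x).
  by apply: funext => y; rewrite big_cons.
by move=> x; apply: continuousD; [exact: hF | exact: IH].
Qed.

Lemma quad_cont n (M : 'M[R]_n) :
  continuous (fun r : 'rV[R]_n => \sum_i r ord0 i * \sum_j M i j * r ord0 j).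
Proof.
apply: cont_sum => i x; apply: continuousM; first exact: coord_continuous.
apply: cont_sum => j y; apply: continuousM; first exact: cst_continuous.
exact: coord_continuous.
Qed.

Lemma quad_zero_alpha (a b : R) : 0 <= b -> (forall t, 0 <= 2 * t * a + t ^+ 2 * b) -> a = 0.
Proof.
move=> b0 H; have := H (- a / (b + 1)).
have b1 : 0 < b + 1 by lra.
set t := - a / (b + 1).
have ht : t * (b + 1) = - a by rewrite /t mulrAC -mulrA mulfV ?gt_eqF // mulr1.
move=> h.
have h2 : 0 <= (2 * t * a + t ^+ 2 * b) * (b + 1) ^+ 2 by apply: mulr_ge0 => //; exact: sqr_ge0.
have e : (2 * t * a + t ^+ 2 * b) * (b + 1) ^+ 2 = 2 * (t * (b + 1)) * a * (b + 1) + (t * (b + 1)) ^+ 2 * b.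
  by ring.
rewrite e ht in h2.
nra.
Qed.


Lemma quad_expand n (M : 'M[R]_n) (w y : 'cV[R]_n) t : M^T = M ->
  dot (w + t *: y) (M *m (w + t *: y)) =
  dot w (M *m w) + 2 * t * dot y (M *m w) + t ^+ 2 * dot y (M *m y).
Proof.
move=> sM.
rewrite mulmxDr -scalemxAr !dotDl !dotDr !dotZl !dotZr.
rewrite [dot w (M *m y)]dot_trmx sM (dotC (M *m w)).
ring.
Qed.

Lemma sq_expand n (w y : 'cV[R]_n) t :
  dot (w + t *: y) (w + t *: y) = dot w w + 2 * t * dot y w + t ^+ 2 * dot y y.
Proof. rewrite !dotDl !dotDr !dotZl !dotZr (dotC w y); ring. Qed.

Lemma rayleigh n (M : 'M[R]_n) lam : M^T = M ->
  (forall a, eigenvalue M a -> lam <= a) ->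
  forall a : 'cV[R]_n, lam * dot a a <= dot a (M *m a).
Proof.
case: n M => [|n] M sM hlam a.
  by rewrite /dot !big_ord0 mulr0.
pose Q (r : 'rV[R]_n.+1) := dot r^T (M *m r^T).
pose sq (r : 'rV[R]_n.+1) := dot r^T r^T.
have QE : Q = (fun r : 'rV[R]_n.+1 => \sum_i r ord0 i * \sum_j M i j * r ord0 j).
  apply: funext => r; rewrite /Q /dot; apply: eq_bigr => i _.
  rewrite !mxE; congr (_ * _); apply: eq_bigr => j _; by rewrite !mxE.
have sqE : sq = (fun r : 'rV[R]_n.+1 => \sum_i r ord0 i * \sum_j (1%:M : 'M[R]_n.+1) i j * r ord0 j).
  apply: funext => r; rewrite /sq /dot; apply: eq_bigr => i _.
  rewrite !mxE; congr (_ * _).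
  rewrite (bigD1 i) //= big1 ?addr0 => [|j /negPf ji]; rewrite !mxE ?eqxx ?mul1r //.
  by rewrite eq_sym ji mulr0n mul0r.
pose S := [set r : 'rV[R]_n.+1 | sq r = 1].
have S0 : S !=set0.
  exists (delta_mx 0 0); rewrite /S /= /sq /dot (bigD1 0) //= big1 ?addr0.
    by rewrite !mxE /= mulr1.
  move=> i /negPf i0; rewrite !mxE /= i0 /= mulr0n mulr0 //.
have Sbox : S `<=` [set v : 'rV[R]_n.+1 | forall i, v ord0 i \in `[(-1 : R), 1]].
  move=> r; rewrite /S /= /sq /dot => h i.
  have hi : r ord0 i ^+ 2 <= 1.
    rewrite -h (bigD1 i) //= !mxE -expr2 lerDl.
    by apply: sumr_ge0 => j _; rewrite !mxE -expr2 sqr_ge0.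
  rewrite in_itv /= -ler_norml -(expr_le1 (n:=2)) //.
  by rewrite real_normK ?num_real.
have Sclosed : closed S.
  have -> : S = sq @^-1` [set 1] by [].
  apply: (@preimage_closed _ _ sq [set 1]); last exact: closed_eq.
  by move=> r _; rewrite sqE; exact: quad_cont.
have Scomp : compact S.
  have Bc : compact [set v : 'rV[R]_n.+1 | forall i, v ord0 i \in `[(-1 : R), 1]].
    apply: (@rV_compact _ _ (fun=> `[(-1 : R), 1]%classic)).
    by move=> _; apply: segment_compact.
  exact: (subclosed_compact Sclosed Bc Sbox).
have [c cS cmin] : exists2 c, c \in S & forall t, t \in S -> Q c <= Q t.
  apply: EVT_min_rV => //.
  by apply: continuous_subspaceT => r; rewrite QE; exact: quad_cont.
set mu := Q c.
have cS' : sq c = 1 by move: cS; rewrite inE.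
set w := c^T.
have w1 : dot w w = 1 by [].
have muE : dot w (M *m w) = mu by [].
have step1 : forall b : 'cV[R]_n.+1, mu * dot b b <= dot b (M *m b).
  move=> b; have [b0|bn0] := eqVneq (dot b b) 0.
    by rewrite (dot_eq0 b0) mulmx0 !dot0l mulr0.
  have bp : 0 < dot b b by rewrite lt_neqAle eq_sym bn0 dot_ge0.
  set s := Num.sqrt (dot b b).
  have sp : 0 < s by rewrite sqrtr_gt0.
  have s2 : s ^+ 2 = dot b b by rewrite sqr_sqrtr // dot_ge0.
  have rS : (s^-1 *: b)^T \in S.
    rewrite inE /S /= /sq trmxK dotZl dotZr -s2 mulrA -expr2 exprVn mulVf //.
    by rewrite expf_neq0 // gt_eqF.
  have := cmin _ rS; rewrite /Q trmxK -scalemxAr dotZl dotZr mulrA -expr2 exprVn.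
  rewrite -/mu s2 => h.
  apply: le_trans (ler_wpM2r (dot_ge0 b) h) _.
  by rewrite mulrAC mulVf ?gt_eqF // mul1r.
have step2 : forall y, dot y (M *m w - mu *: w) = 0.
  move=> y; apply: (@quad_zero_alpha _ (dot y (M *m y) - mu * dot y y)).
    by rewrite subr_ge0.
  move=> t; have := step1 (w + t *: y).
  rewrite quad_expand // sq_expand muE w1 -subr_ge0 => h.
  rewrite dotDr dotNr dotZr.
  set D := dot y (M *m w) in h *; set E := dot y w in h *.
  set F := dot y (M *m y) in h *; set G := dot y y in h *.
  suff -> : 2 * t * (D - mu * E) + t ^+ 2 * (F - mu * G) =
    mu + 2 * t * D + t ^+ 2 * F - mu * (1 + 2 * t * E + t ^+ 2 * G) by [].
  by ring.
have step3 : M *m w = mu *: w.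
  by apply/eqP; rewrite -subr_eq0; apply/eqP/dot_eq0; exact: step2.
have eig : eigenvalue M mu.
  apply/eigenvalueP; exists c.
    have := congr1 trmx step3; rewrite trmx_mul sM /w trmxK => ->.
    by rewrite linearZ /= trmxK.
  apply/eqP => c0; move: cS'; rewrite /sq c0 trmx0 dot0l => /esym/eqP.
  by rewrite oner_eq0.
apply: le_trans (step1 a).
by apply: ler_wpM2r; [exact: dot_ge0 | exact: hlam].
Qed.

End PartB.


Section PartC.
Variable R : realType.
Variables (n d : nat) (e : rel 'I_n.+1) (l : 'I_n.+1).
Hypothesis esym : symmetric e.

Let N := n.+1.
Let L : 'M[R]_N := laplacian (adjacency R e).
Let Ll : 'M[R]_N := zero_row l L.
Let K : 'M[R]_(N * d) := tensmx Ll (1%:M : 'M[R]_d).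
Let M : 'M[R]_n := Mmat l L.

Lemma lift_neq (i : 'I_n) : (lift l i == l) = false.
Proof. by rewrite eq_sym eq_liftF. Qed.

Lemma LE i j : L i j = (if i == j then \sum_k (e i k)%:R else 0) - (e i j)%:R.
Proof.
rewrite /L /laplacian !mxE; congr (_ - _).
  case: eqP => [->|_]; last by rewrite mulr0n.
  by apply: eq_bigr => k _; rewrite mxE.
Qed.

Lemma L_sym : L^T = L.
Proof.
apply/matrixP => i j; rewrite mxE !LE esym eq_sym.
by case: eqP => // ->.
Qed.

Lemma MmatE i j : M i j = L (lift l i) (lift l j).
Proof. by rewrite /M /Mmat !mxE lift_neq. Qed.

Lemma M_sym : M^T = M.
Proof.
apply/matrixP => i j; rewrite mxE !MmatE.
by rewrite -{1}L_sym mxE.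
Qed.

Lemma LlE i j : Ll i j = if i == l then 0 else L i j.
Proof. by rewrite mxE. Qed.

Lemma sum_tens (F : 'I_(N * d) -> R) :
  \sum_x F x = \sum_(i < N) \sum_(k < d) F (mxtens_index (i, k)).
Proof.
rewrite pair_big /= (reindex (@mxtens_index N d)) /=.
  by apply: eq_bigr => -[i k].
by exists (@mxtens_unindex N d) => x _; [apply: mxtens_indexK | apply: mxtens_unindexK].
Qed.

Lemma Kmul (z : 'cV[R]_(N * d)) i k :
  (K *m z) (mxtens_index (i, k)) 0 = \sum_j Ll i j * z (mxtens_index (j, k)) 0.
Proof.
rewrite mxE sum_tens; apply: eq_bigr => j _.
rewrite (bigD1 k) //= big1 ?addr0.
  by rewrite /K tensmxE !mxE eqxx mulr1n mulr1.
by move=> kp /negPf kk; rewrite /K tensmxE !mxE [k == _]eq_sym kk mulr0n mulr0 mul0r.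
Qed.

Lemma K_block (z : 'cV[R]_(N * d)) : block_zero l (K *m z).
Proof.
move=> k; rewrite Kmul big1 // => j _; by rewrite LlE eqxx mul0r.
Qed.

Definition projk (z : 'cV[R]_(N * d)) (k : 'I_d) : 'cV[R]_n :=
  \col_i z (mxtens_index (lift l i, k)) 0.

Lemma Kmul_lift (z : 'cV[R]_(N * d)) i k : block_zero l z ->
  (K *m z) (mxtens_index (lift l i, k)) 0 = (M *m projk z k) i 0.
Proof.
move=> bz; rewrite Kmul mxE (bigD1_ord l) //= bz mulr0 add0r.
apply: eq_bigr => j _; rewrite LlE lift_neq /= MmatE /projk; congr (_ * _); by rewrite mxE.
Qed.

Lemma dot_red (y z : 'cV[R]_(N * d)) : block_zero l z ->
  dot y (K *m z) = \sum_k dot (projk y k) (M *m projk z k).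
Proof.
move=> bz; rewrite /dot sum_tens (bigD1_ord l) //=.
rewrite big1 ?add0r => [|k _]; last by rewrite K_block mulr0.
rewrite exchange_big /=; apply: eq_bigr => k _; apply: eq_bigr => i _.
by rewrite Kmul_lift // /projk [X in _ = X * _]mxE.
Qed.

Lemma dot_red2 (y : 'cV[R]_(N * d)) : block_zero l y ->
  dot y y = \sum_k dot (projk y k) (projk y k).
Proof.
move=> bz; rewrite /dot sum_tens (bigD1_ord l) //=.
rewrite big1 ?add0r => [|k _]; last by rewrite bz mulr0.
rewrite exchange_big /=; apply: eq_bigr => k _; apply: eq_bigr => i _.
by rewrite /projk !mxE.
Qed.

Lemma K_sym (y z : 'cV[R]_(N * d)) : block_zero l y -> block_zero l z ->
  dot y (K *m z) = dot z (K *m y).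
Proof.
move=> by_ bz; rewrite !dot_red //; apply: eq_bigr => k _.
by rewrite dot_trmx M_sym dotC.
Qed.

Lemma K_rayleigh lam : (forall a, eigenvalue M a -> lam <= a) ->
  forall y, block_zero l y -> lam * dot y y <= dot y (K *m y).
Proof.
move=> hl y by_; rewrite dot_red // dot_red2 // mulr_sumr.
apply: ler_sum => k _; apply: rayleigh => //; exact: M_sym.
Qed.


Lemma M_eigvec lam : eigenvalue M lam ->
  exists2 w0 : 'cV[R]_n, w0 != 0 & M *m w0 = lam *: w0.
Proof.
case/eigenvalueP => v hv vn0; exists v^T.
  by apply: contra vn0 => /eqP h; rewrite -[v]trmxK h trmx0.
have := congr1 trmx hv; rewrite trmx_mul M_sym => ->.
by rewrite linearZ.
Qed.

Lemma K_eigvec lam : (0 < d)%N -> eigenvalue M lam ->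
  exists w, [/\ block_zero l w, w != 0 & K *m w = lam *: w].
Proof.
move=> dpos /M_eigvec [w0 w0n hw0].
pose k0 : 'I_d := Ordinal dpos.
pose w : 'cV[R]_(N * d) := \col_x (let p := @mxtens_unindex N d x in
  if p.2 == k0 then (if unlift l p.1 is Some i' then w0 i' 0 else 0) else 0).
have wE : forall i k, w (mxtens_index (i, k)) 0 =
    if k == k0 then (if unlift l i is Some i' then w0 i' 0 else 0) else 0.
  by move=> i k; rewrite mxE mxtens_indexK.
have bw : block_zero l w by move=> k; rewrite wE unlift_none; case: (k == k0).
have pw : forall k, projk w k = if k == k0 then w0 else 0.
  move=> k; apply/matrixP => i j; rewrite (ord1 j) mxE wE liftK.
  by case: (k == k0); rewrite ?mxE.
exists w; split => //.
  have [i' hi'|h0] := pickP (fun i' => w0 i' 0 != 0); last first.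
    case/eqP: w0n; apply/matrixP => i j; rewrite (ord1 j) mxE.
    by have := h0 i; move/negbFE/eqP.
  apply/eqP => w0'; have := congr1 (fun m : 'cV[R]_(N * d) => m (mxtens_index (lift l i', k0)) 0) w0'.
  by rewrite /= wE eqxx liftK mxE => h; rewrite h eqxx in hi'.
apply/matrixP => x j; rewrite (ord1 j); case: (mxtens_indexP x) => i k.
rewrite [RHS]mxE.
case: (unliftP l i) => [i' ->|->]; last by rewrite K_block bw mulr0.
rewrite Kmul_lift // pw wE liftK.
case: (k == k0); last by rewrite mulmx0 mxE mulr0.
by rewrite hw0 mxE.
Qed.

Definition extv (a : 'cV[R]_n) (i : 'I_N) : R :=
  if unlift l i is Some i' then a i' 0 else 0.

Lemma quad_ext (a : 'cV[R]_n) :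
  dot a (M *m a) = \sum_i \sum_j extv a i * L i j * extv a j.
Proof.
rewrite /dot (bigD1_ord l) //= {1}/extv unlift_none [X in _ = X + _]big1 ?add0r; last by move=> j _; rewrite !mul0r.
apply: eq_bigr => i _; rewrite mxE [RHS](bigD1_ord l) //= [extv a l]/extv unlift_none mulr0 add0r.
rewrite big_distrr /=; apply: eq_bigr => j _.
by rewrite /extv !liftK MmatE mulrA.
Qed.

Lemma lap_ident (x : 'I_N -> R) :
  2 * (\sum_i \sum_j x i * L i j * x j) = \sum_i \sum_j (e i j)%:R * (x i - x j) ^+ 2.
Proof.
pose T i j := (e i j)%:R * x i ^+ 2 - (e i j)%:R * x i * x j : R.
have h1 : forall i, \sum_j x i * L i j * x j = \sum_j T i j.
  move=> i; under eq_bigr do rewrite LE mulrBr mulrBl.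
  rewrite sumrB [X in X - _](bigD1 i) //= eqxx [X in _ + X - _]big1 ?addr0; last first.
    by move=> j ji; rewrite eq_sym (negPf ji) mulr0 mul0r.
  rewrite /T sumrB; congr (_ - _); last by apply: eq_bigr => j _; rewrite [x i * _]mulrC.
  by rewrite mulrAC -expr2 mulrC mulr_suml.
have h2 : forall i j, (e i j)%:R * (x i - x j) ^+ 2 = T i j + T j i.
  by move=> i j; rewrite /T (esym j i); ring.
under eq_bigr do rewrite h1.
under [RHS]eq_bigr do under eq_bigr do rewrite h2.
under [RHS]eq_bigr do rewrite big_split /=.
rewrite big_split /= [X in _ = _ + X]exchange_big /=.
by rewrite mulr2n mulrDl mul1r.
Qed.

Lemma M_pd (a : 'cV[R]_n) : (forall i j, connect e i j) -> a != 0 -> 0 < dot a (M *m a).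
Proof.
move=> conn an0; rewrite lt_neqAle; apply/andP; split; last first.
  rewrite quad_ext -(pmulr_rge0 _ (ltr0Sn _ 1)) lap_ident.
  by apply: sumr_ge0 => i _; apply: sumr_ge0 => j _; apply: mulr_ge0 => //; exact: sqr_ge0.
apply/eqP => h0; case/eqP: an0.
pose x := extv a.
have S0 : \sum_i \sum_j (e i j)%:R * (x i - x j) ^+ 2 = 0 :> R.
  by rewrite -lap_ident -quad_ext -h0 mulr0.
have hij : forall i j, e i j -> x i = x j.
  move=> i j eij.
  have Si := psumr_eq0P (fun i _ => sumr_ge0 _ (fun j _ => mulr_ge0 (ler0n _ _) (sqr_ge0 (x i - x j)))) S0 (i:=i) isT.
  have := psumr_eq0P (fun j _ => mulr_ge0 (ler0n _ _) (sqr_ge0 (x i - x j))) Si (i:=j) isT.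
  rewrite eij mul1r => /eqP; rewrite sqrf_eq0 subr_eq0 => /eqP //.
have xl : x l = 0 by rewrite /x /extv unlift_none.
have xall : forall i, x i = 0.
  have aux : forall p y, x y = 0 -> path e y p -> x (last y p) = 0.
    elim=> [|z p IH] y xy //=.
    case/andP => eyz pz; apply: IH pz.
    by rewrite -(hij _ _ eyz).
  move=> i; case/connectP: (conn l i) => p pp ->.
  exact: aux.
apply/matrixP => i j; rewrite (ord1 j) mxE.
by have := xall (lift l i); rewrite /x /extv liftK.
Qed.

Lemma lam_pos lam : (forall i j, connect e i j) -> eigenvalue M lam -> 0 < lam.
Proof.
move=> conn /M_eigvec [w0 w0n hw0].
have := M_pd conn w0n; rewrite hw0 dotZr.
have : 0 < dot w0 w0.
  rewrite lt_neqAle dot_ge0 andbT eq_sym; apply: contra w0n => /eqP h; apply/eqP; exact: dot_eq0.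
by move=> p; rewrite pmulr_lgt0.
Qed.

End PartC.


Section PartD.
Variable R : realType.

Lemma sys_p m kp ku (G : 'M[R]_m) y :
  e_p (sysmat kp ku G *m y) = kp *: (G *m e_p y) + e_u y.
Proof.
rewrite /e_p /e_u /sysmat -{1}(vsubmxK y) mul_block_col col_mxKu.
by rewrite -[X in row_mx _ _ *m X]vsubmxK mul_row_col mul0mx add0r mul1mx scalemxAl.
Qed.

Lemma sys_v m kp ku (G : 'M[R]_m) y :
  e_v (sysmat kp ku G *m y) = kp *: (G *m e_v y) + ku *: (G *m e_u y).
Proof.
rewrite /e_v /e_u /sysmat -{1}(vsubmxK y) -{1}(vsubmxK (dsubmx y)).
rewrite mul_block_col col_mxKd mul0mx add0r mul_block_col col_mxKu.
by rewrite !scalemxAl.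
Qed.

Lemma sys_u m kp ku (G : 'M[R]_m) y :
  e_u (sysmat kp ku G *m y) = ku *: (G *m e_u y).
Proof.
rewrite /e_v /e_u /sysmat -{1}(vsubmxK y) -{1}(vsubmxK (dsubmx y)).
rewrite mul_block_col col_mxKd mul0mx add0r mul_block_col col_mxKd.
by rewrite mul0mx add0r scalemxAl.
Qed.

Lemma is_derive_lin (a : R) (x : R) : is_derive x 1 (fun s : R => a * s) a.
Proof.
have := @is_deriveM R R (cst a) id x 1 0 1 (is_derive_cst _ _ _) (is_derive_id _ _).
by move=> h; apply: is_derive_eq h _; rewrite /cst /= scaler0 addr0 [_%:A]mulr1.
Qed.

Lemma is_derive_expl (a x : R) : is_derive x 1 (fun s : R => expR (a * s)) (expR (a * x) * a).
Proof.
exact: (@is_derive1_comp R expR (fun s => a * s) x (expR (a * x)) a (is_derive_expR _) (is_derive_lin a x)).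
Qed.

Lemma is_derive_dot m (f : R -> 'cV[R]_m) (df : 'cV[R]_m) (t : R) :
  (forall i, is_derive t 1 (fun s => f s i 0) (df i 0)) ->
  is_derive t 1 (fun s => dot (f s) (f s)) (2 * dot (f t) df).
Proof.
move=> hf.
have -> : (fun s => dot (f s) (f s)) = \sum_(i < m) (fun s => f s i 0 * f s i 0).
  by rewrite fct_sumE.
have H := @is_derive_sum R R R m (fun i s => f s i 0 * f s i 0) t 1 _
  (fun i => @is_deriveM R R (fun s => f s i 0) (fun s => f s i 0) t 1 _ _ (hf i) (hf i)).
apply: is_derive_eq H _.
rewrite /dot mulr_sumr; apply: eq_bigr => i _ /=.
by rewrite mulr2n mulrDl mul1r.
Qed.

Lemma derive0_cst (f : R -> R) : (forall t : R, is_derive t 1 f 0) -> forall t, f t = f 0.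
Proof.
move=> hf t.
have cf : continuous f.
  by move=> x; apply/differentiable_continuous/derivable1_diffP; case: (hf x).
have key : forall a b, a < b -> f b = f a.
  move=> a b ab; have [c _ ] := MVT ab (fun x _ => hf x) (continuous_subspaceT cf).
  by rewrite mul0r => /eqP; rewrite subr_eq0 => /eqP.
case: (ltgtP t 0) => [t0|t0|->] //.
  by rewrite (key _ _ t0).
by rewrite (key _ _ t0).
Qed.

Lemma comparison (f df : R -> R) (a : R) :
  (forall t : R, is_derive t 1 f (df t)) ->
  (forall t, 0 <= t -> df t <= - a * f t) ->
  forall t, 0 <= t -> f t <= expR (- a * t) * f 0.
Proof.
move=> hf hdf t t0.
pose g s := expR (a * s) * f s.
pose dg s := expR (a * s) * df s + f s * (expR (a * s) * a).
have hg : forall s : R, is_derive s 1 g (dg s).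
  move=> s; have H := is_deriveM (is_derive_expl a s) (hf s).
  exact: (@is_derive_eq _ _ _ g s 1 (dg s) _ H).
have cg : continuous g.
  by move=> x; apply/differentiable_continuous/derivable1_diffP; case: (hg x).
have gle : g t <= g 0.
  case: (ltrgt0P t) t0 => [tp|//|->] _; last by [].
  have [c] := MVT tp (fun x _ => hg x) (continuous_subspaceT cg).
  rewrite in_itv /= => /andP[c0 ct] eq.
  rewrite -subr_le0 eq subr0; apply: mulr_le0_ge0; last exact: ltW.
  rewrite /dg mulrCA -mulrDr; apply: mulr_ge0_le0; first exact: expR_ge0.
  by have := hdf c (ltW c0); lra.
move: gle; rewrite /g mulr0 expR0 mul1r => h.
have -> : f t = expR (- a * t) * (expR (a * t) * f t).
  by rewrite mulrA -expRD mulNr addNr expR0 mul1r.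
by apply: ler_wpM2l => //; exact: expR_ge0.
Qed.

End PartD.


Section PartE.
Variables (R : realType) (n d : nat) (e : rel 'I_n.+1) (l : 'I_n.+1) (kp ku lam : R).
Hypotheses (esym : symmetric e) (conn : forall i j, connect e i j) (dpos : (0 < d)%N)
  (kp0 : 0 < kp) (ku0 : 0 < ku)
  (eig : eigenvalue (Mmat l (laplacian (adjacency R e))) lam)
  (lmin : forall a, eigenvalue (Mmat l (laplacian (adjacency R e))) a -> lam <= a).

Let m := (n.+1 * d)%N.
Let L := laplacian (adjacency R e).
Let K : 'M[R]_m := tensmx (zero_row l L) (1%:M : 'M[R]_d).
Let G := Gmat d l L.
Let A := sysmat kp ku G.
Let Z (y : 'cV[R]_m) := block_zero (d:=d) l y.

Lemma GE (y : 'cV[R]_m) : G *m y = - (K *m y).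
Proof. by rewrite /G /Gmat mulNmx. Qed.

Lemma lamp : 0 < lam.
Proof. exact: (lam_pos esym conn eig). Qed.

Lemma Kray (y : 'cV[R]_m) : Z y -> lam * dot y y <= dot y (K *m y).
Proof. exact: K_rayleigh. Qed.

Lemma Ksym (y z : 'cV[R]_m) : Z y -> Z z -> dot y (K *m z) = dot z (K *m y).
Proof. exact: K_sym. Qed.

Lemma Kpsd (y : 'cV[R]_m) : Z y -> 0 <= dot y (K *m y).
Proof.
move=> zy; apply: le_trans (Kray zy); apply: mulr_ge0; last exact: dot_ge0.
exact: ltW lamp.
Qed.

Lemma Zlin a (y z : 'cV[R]_m) : Z y -> Z z -> Z (a *: y + z).
Proof. by move=> zy zz k; rewrite !mxE zy zz mulr0 addr0. Qed.

Lemma Kq_expand a (y z : 'cV[R]_m) : Z y -> Z z ->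
  dot (a *: y + z) (K *m (a *: y + z)) =
  a ^+ 2 * dot y (K *m y) + 2 * a * dot y (K *m z) + dot z (K *m z).
Proof.
move=> zy zz; rewrite mulmxDr -scalemxAr !dotDl !dotDr !dotZl !dotZr (Ksym zz zy).
ring.
Qed.

Lemma der_p (x : R -> 'cV[R]_(m + (m + m))) (t : R) c : is_solution A x ->
  is_derive t 1 (fun s => e_p (x s) c 0) (e_p (A *m x t) c 0).
Proof.
move=> H; have -> : (fun s => e_p (x s) c 0) = (fun s => x s (lshift _ c) 0).
  by apply: funext => s; rewrite /e_p mxE.
by rewrite /e_p [X in is_derive _ _ _ X]mxE; exact: H.
Qed.

Lemma der_v (x : R -> 'cV[R]_(m + (m + m))) (t : R) c : is_solution A x ->
  is_derive t 1 (fun s => e_v (x s) c 0) (e_v (A *m x t) c 0).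
Proof.
move=> H; have -> : (fun s => e_v (x s) c 0) = (fun s => x s (rshift _ (lshift _ c)) 0).
  by apply: funext => s; rewrite /e_v !mxE.
by rewrite /e_v [X in is_derive _ _ _ X]mxE [X in is_derive _ _ _ X]mxE; exact: H.
Qed.

Lemma der_u (x : R -> 'cV[R]_(m + (m + m))) (t : R) c : is_solution A x ->
  is_derive t 1 (fun s => e_u (x s) c 0) (e_u (A *m x t) c 0).
Proof.
move=> H; have -> : (fun s => e_u (x s) c 0) = (fun s => x s (rshift _ (rshift _ c)) 0).
  by apply: funext => s; rewrite /e_u !mxE.
by rewrite /e_u [X in is_derive _ _ _ X]mxE [X in is_derive _ _ _ X]mxE; exact: H.
Qed.


Lemma GZ (y : 'cV[R]_m) k : (G *m y) (mxtens_index (l, k)) 0 = 0.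
Proof.
rewrite GE [LHS]mxE; have := K_block (R:=R) (d:=d) e l y k.
by rewrite -/L -/K => ->; rewrite oppr0.
Qed.

Lemma Zsol (x : R -> 'cV[R]_(m + (m + m))) : is_solution A x ->
  [/\ Z (e_p (x 0)), Z (e_v (x 0)) & Z (e_u (x 0))] ->
  forall t, [/\ Z (e_p (x t)), Z (e_v (x t)) & Z (e_u (x t))].
Proof.
move=> H [zp zv zu].
have hu : forall t, Z (e_u (x t)).
  move=> t k; rewrite (@derive0_cst _ (fun s => e_u (x s) (mxtens_index (l, k)) 0) _ t).
    exact: zu k.
  move=> s; apply: is_derive_eq (der_u s _ H) _.
  by rewrite sys_u [LHS]mxE GZ mulr0.
split=> // [k|k].
  rewrite (@derive0_cst _ (fun s => e_p (x s) (mxtens_index (l, k)) 0) _ t).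
    exact: zp k.
  move=> s; apply: is_derive_eq (der_p s _ H) _.
  by rewrite sys_p [LHS]mxE [X in X + _]mxE GZ mulr0 add0r (hu s k).
rewrite (@derive0_cst _ (fun s => e_v (x s) (mxtens_index (l, k)) 0) _ t).
  exact: zv k.
move=> s; apply: is_derive_eq (der_v s _ H) _.
by rewrite sys_v [LHS]mxE [X in X + _]mxE [X in _ + X]mxE !GZ !mulr0 addr0.
Qed.


Section Sol.
Variable x : R -> 'cV[R]_(m + (m + m)).
Hypothesis H : is_solution A x.
Let p t := e_p (x t).
Let v t := e_v (x t).
Let u t := e_u (x t).

Lemma dP (t : R) : is_derive t 1 (fun s => dot (p s) (p s))
  (2 * (- kp * dot (p t) (K *m p t) + dot (p t) (u t))).
Proof.
apply: is_derive_eq (is_derive_dot (fun c => der_p t c H)) _.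
by rewrite sys_p dotDr dotZr -/G GE dotNr mulrN mulNr.
Qed.

Lemma dV (t : R) : is_derive t 1 (fun s => dot (v s) (v s))
  (2 * (- kp * dot (v t) (K *m v t) - ku * dot (v t) (K *m u t))).
Proof.
apply: is_derive_eq (is_derive_dot (fun c => der_v t c H)) _.
by rewrite sys_v dotDr !dotZr -/G !GE !dotNr !mulrN !mulNr.
Qed.

Lemma dU (t : R) : is_derive t 1 (fun s => dot (u s) (u s))
  (2 * (- ku * dot (u t) (K *m u t))).
Proof.
apply: is_derive_eq (is_derive_dot (fun c => der_u t c H)) _.
by rewrite sys_u dotZr -/G GE dotNr mulrN mulNr.
Qed.

End Sol.

Lemma sqrt_exp_bound (a t X X0 : R) : 0 <= X0 ->
  X <= expR (- (2 * a) * t) * X0 -> Num.sqrt X <= expR (- a * t) * Num.sqrt X0.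
Proof.
move=> X00 h; apply: le_trans (ler_wsqrtr h) _.
have -> : - (2 * a) * t = - a * t + - a * t by ring.
by rewrite expRD sqrtrM ?mulr_ge0 ?expR_ge0 // -expr2 sqrtr_sqr ger0_norm ?expR_ge0.
Qed.


Lemma W_arith (P V U Kpp Kvv Kuu Kvu pu : R) :
  0 <= P -> 0 <= V -> 0 <= U -> lam * P <= Kpp -> lam * V <= Kvv -> lam * U <= Kuu ->
  2 * pu <= kp * lam * P + (kp * lam)^-1 * U ->
  0 <= kp * Kvv + 2 * ku * Kvu + ku ^+ 2 / kp * Kuu ->
  2 * (- kp * Kpp + pu) + 2 * (- kp * Kvv - ku * Kvu) +
    (1 + ku / kp + 2 / (kp * ku * lam ^+ 2)) * (2 * (- ku * Kuu))
  <= - Num.min (kp * lam) (ku * lam / 2) *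
     (P + V + (1 + ku / kp + 2 / (kp * ku * lam ^+ 2)) * U).
Proof.
move=> P0 V0 U0 hP hV hU hy hc.
have l0 := lamp.
set c := 1 + ku / kp + 2 / (kp * ku * lam ^+ 2).
set b := Num.min (kp * lam) (ku * lam / 2).
set r := (kp * lam)^-1.
have kpl : 0 < kp * lam by apply: mulr_gt0.
have q0 : 0 < ku / kp by apply: divr_gt0.
have z0 : 0 < 2 / (kp * ku * lam ^+ 2).
  by apply: divr_gt0 => //; apply: mulr_gt0; [apply: mulr_gt0|apply: exprn_gt0].
have c1 : 1 <= c by rewrite /c; lra.
have cq : ku / kp <= c by rewrite /c; lra.
have r0 : 0 < r by rewrite /r invr_gt0.
have ckl : 2 * r <= c * ku * lam.
  have e1 : 2 / (kp * ku * lam ^+ 2) * ku * lam = 2 * r.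
    by rewrite /r; field; rewrite !gt_eqF.
  have : 2 / (kp * ku * lam ^+ 2) * ku * lam <= c * ku * lam.
    apply: ler_wpM2r; first exact: ltW.
    apply: ler_wpM2r; first exact: ltW.
    by rewrite /c; lra.
  by rewrite e1.
have cku : ku ^+ 2 / kp <= c * ku.
  have -> : ku ^+ 2 / kp = ku / kp * ku by rewrite expr2 mulrAC.
  by apply: ler_wpM2r; [exact: ltW | exact: cq].
have b1 : b <= kp * lam by rewrite /b ge_min lexx.
have b2 : b <= ku * lam / 2 by rewrite /b ge_min lexx orbT.
have hKuu : 0 <= Kuu by apply: le_trans hU; apply: mulr_ge0; [exact: ltW | exact: U0].
have c0 : 0 <= c by lra.
have cku0 : 0 <= c * ku by apply: mulr_ge0 => //; exact: ltW.
have PV0 : 0 <= P + V by lra.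
have cU0 : 0 <= c * U by apply: mulr_ge0.
have rc : r <= c * ku * lam / 2 by lra.
have s1 : 2 * (- kp * Kpp + pu) <= - (kp * lam) * P + r * U.
  have : kp * (lam * P) <= kp * Kpp by apply: ler_wpM2l; [exact: ltW | exact: hP].
  rewrite /r; lra.
have s2 : 2 * (- kp * Kvv - ku * Kvu) <= - kp * Kvv + ku ^+ 2 / kp * Kuu by lra.
have s3 : kp * (lam * V) <= kp * Kvv by apply: ler_wpM2l; [exact: ltW | exact: hV].
have s4 : c * (2 * (- ku * Kuu)) + ku ^+ 2 / kp * Kuu <= - (c * ku) * Kuu.
  have : ku ^+ 2 / kp * Kuu <= c * ku * Kuu by apply: ler_wpM2r.
  lra.
have s5 : (c * ku) * (lam * U) <= (c * ku) * Kuu by apply: ler_wpM2l.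
have s6 : r * U <= (c * ku * lam / 2) * U by apply: ler_wpM2r.
have s7 : b * (P + V) <= kp * lam * (P + V) by apply: ler_wpM2r.
have s8 : b * (c * U) <= ku * lam / 2 * (c * U) by apply: ler_wpM2r.
have e2 : c * ku * (lam * U) = c * ku * lam * U by ring.
have e3 : ku * lam / 2 * (c * U) = c * ku * lam / 2 * U by ring.
rewrite e2 in s5; rewrite e3 in s8.
have e4 : kp * (lam * V) = kp * lam * V by ring.
rewrite e4 in s3.
have e5 : - b * (P + V + c * U) = - (b * (P + V)) - b * (c * U) by ring.
rewrite e5.
lra.
Qed.

Definition cW := 1 + ku / kp + 2 / (kp * ku * lam ^+ 2).
Definition bW := Num.min (kp * lam) (ku * lam / 2).

Lemma cW1 : 1 <= cW.
Proof.
have l0 := lamp.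
have q0 : 0 < ku / kp by apply: divr_gt0.
have z0 : 0 < 2 / (kp * ku * lam ^+ 2).
  by apply: divr_gt0 => //; apply: mulr_gt0; [apply: mulr_gt0|apply: exprn_gt0].
rewrite /cW; lra.
Qed.

Lemma bW0 : 0 < bW.
Proof.
have l0 := lamp.
rewrite /bW lt_min; apply/andP; split; first exact: mulr_gt0.
by apply: divr_gt0 => //; apply: mulr_gt0.
Qed.

Lemma dot_split (y : 'cV[R]_(m + (m + m))) :
  dot y y = dot (e_p y) (e_p y) + dot (e_v y) (e_v y) + dot (e_u y) (e_u y).
Proof.
rewrite /dot big_split_ord /= [X in _ + X]big_split_ord /= addrA.
congr (_ + _ + _); apply: eq_bigr => i _; by rewrite !mxE.
Qed.

Section Sol2.
Variable x : R -> 'cV[R]_(m + (m + m)).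
Hypothesis H : is_solution A x.
Hypothesis H0 : [/\ Z (e_p (x 0)), Z (e_v (x 0)) & Z (e_u (x 0))].
Let p t := e_p (x t).
Let v t := e_v (x t).
Let u t := e_u (x t).

Lemma Zt t : [/\ Z (p t), Z (v t) & Z (u t)].
Proof. exact: Zsol H H0 t. Qed.

Lemma U_rate t : 0 <= t ->
  dot (u t) (u t) <= expR (- (2 * (ku * lam)) * t) * dot (u 0) (u 0).
Proof.
move=> t0; apply: (comparison (dU H) _ t0) => s _.
have [_ _ zu] := Zt s; have := Kray zu => h.
have : ku * (lam * dot (u s) (u s)) <= ku * dot (u s) (K *m u s).
  by apply: ler_wpM2l => //; exact: ltW.
lra.
Qed.

Lemma u_norm_rate t : 0 <= t ->
  vnorm (u t) <= expR (- (ku * lam) * t) * vnorm (u 0).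
Proof.
move=> t0; rewrite !vnormE; apply: sqrt_exp_bound; first exact: dot_ge0.
exact: U_rate.
Qed.

Lemma u_zero : u 0 = 0 -> forall t, 0 <= t -> u t = 0.
Proof.
move=> u0 t t0; apply: dot_eq0; apply/eqP; rewrite eq_le dot_ge0 andbT.
by have := U_rate t0; rewrite u0 dot0l mulr0.
Qed.

Lemma PV_rate : u 0 = 0 -> forall t, 0 <= t ->
  dot (p t) (p t) + dot (v t) (v t) <=
  expR (- (2 * (kp * lam)) * t) * (dot (p 0) (p 0) + dot (v 0) (v 0)).
Proof.
move=> u0 t t0.
have hd : forall s : R, is_derive s 1 (fun s => dot (p s) (p s) + dot (v s) (v s))
   (2 * (- kp * dot (p s) (K *m p s) + dot (p s) (u s)) +
    2 * (- kp * dot (v s) (K *m v s) - ku * dot (v s) (K *m u s))).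
  move=> s; exact: (is_deriveD (dP H s) (dV H s)).
apply: (comparison hd _ t0) => s s0.
rewrite (u_zero u0 s0) mulmx0 !dot0r.
have [zp zv _] := Zt s.
have h1 := Kray zp; have h2 := Kray zv.
have : kp * (lam * dot (p s) (p s)) <= kp * dot (p s) (K *m p s).
  by apply: ler_wpM2l => //; exact: ltW.
have : kp * (lam * dot (v s) (v s)) <= kp * dot (v s) (K *m v s).
  by apply: ler_wpM2l => //; exact: ltW.
lra.
Qed.

Lemma vnorm2E (a b : 'cV[R]_m) : vnorm2 a b = Num.sqrt (dot a a + dot b b).
Proof. by rewrite /vnorm2 !vnormE !sqr_sqrtr ?dot_ge0. Qed.

Lemma pv_norm_rate : u 0 = 0 -> forall t, 0 <= t ->
  vnorm2 (p t) (v t) <= expR (- (kp * lam) * t) * vnorm2 (p 0) (v 0).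
Proof.
move=> u0 t t0; rewrite !vnorm2E; apply: sqrt_exp_bound.
  by apply: addr_ge0; exact: dot_ge0.
exact: PV_rate.
Qed.

Let Wf s := dot (p s) (p s) + dot (v s) (v s) + cW * dot (u s) (u s).

Lemma W_rate t : 0 <= t -> Wf t <= expR (- bW * t) * Wf 0.
Proof.
move=> t0.
have hd : forall s : R, is_derive s 1 Wf
   (2 * (- kp * dot (p s) (K *m p s) + dot (p s) (u s)) +
    2 * (- kp * dot (v s) (K *m v s) - ku * dot (v s) (K *m u s)) +
    cW * (2 * (- ku * dot (u s) (K *m u s)))).
  move=> s; exact: (is_deriveD (is_deriveD (dP H s) (dV H s)) (is_deriveZ cW (dU H s))).
apply: (comparison hd _ t0) => s _.
have [zp zv zu] := Zt s.
have l0 := lamp.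
apply: W_arith; try exact: dot_ge0; try exact: Kray.
  exact: young (mulr_gt0 kp0 l0).
have := Kpsd (Zlin (kp / ku) zv zu).
rewrite Kq_expand //.
set X := dot (v s) (K *m v s); set Y := dot (v s) (K *m u s); set Z' := dot (u s) (K *m u s).
move=> h.
have -> : kp * X + 2 * ku * Y + ku ^+ 2 / kp * Z' =
  ku ^+ 2 / kp * ((kp / ku) ^+ 2 * X + 2 * (kp / ku) * Y + Z').
  by field; rewrite !gt_eqF.
apply: mulr_ge0 => //; apply: divr_ge0; [exact: sqr_ge0 | exact: ltW].
Qed.

Lemma x_bound t : 0 <= t -> dot (x t) (x t) <= expR (- bW * t) * Wf 0.
Proof.
move=> t0; apply: le_trans (W_rate t0).
rewrite dot_split /Wf; apply: lerD => //.
rewrite -[X in X <= _]mul1r; apply: ler_wpM2r; [exact: dot_ge0 | exact: cW1].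
Qed.

Lemma W0_bound : Wf 0 <= cW * dot (x 0) (x 0).
Proof.
rewrite dot_split /Wf !mulrDr.
have c1 := cW1.
have := dot_ge0 (p 0); have := dot_ge0 (v 0).
rewrite -/(p 0) -/(v 0) -/(u 0).
have : dot (p 0) (p 0) <= cW * dot (p 0) (p 0).
  rewrite -[X in X <= _]mul1r; apply: ler_wpM2r => //; exact: dot_ge0.
have : dot (v 0) (v 0) <= cW * dot (v 0) (v 0).
  rewrite -[X in X <= _]mul1r; apply: ler_wpM2r => //; exact: dot_ge0.
lra.
Qed.

End Sol2.

Lemma Wf0_ge0 (y : 'cV[R]_(m + (m + m))) :
  0 <= dot (e_p y) (e_p y) + dot (e_v y) (e_v y) + cW * dot (e_u y) (e_u y).
Proof.
have c1 := cW1.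
apply: addr_ge0; first by apply: addr_ge0; exact: dot_ge0.
apply: mulr_ge0; [lra | exact: dot_ge0].
Qed.

Lemma stability eps : 0 < eps -> exists2 delta : R, 0 < delta &
  forall x, is_solution A x -> [/\ Z (e_p (x 0)), Z (e_v (x 0)) & Z (e_u (x 0))] ->
    vnorm (x 0) < delta -> forall t : R, 0 <= t -> vnorm (x t) < eps.
Proof.
move=> e0.
have c1 := cW1.
have sc : 0 < Num.sqrt cW by rewrite sqrtr_gt0; lra.
exists (eps / Num.sqrt cW); first exact: divr_gt0.
move=> x H H0 hx t t0.
have b0 := bW0.
have h1 : dot (x t) (x t) <= cW * dot (x 0) (x 0).
  apply: le_trans (x_bound H H0 t0) _; apply: le_trans (W0_bound x).
  rewrite -[X in _ <= X]mul1r; apply: ler_wpM2r; first exact: Wf0_ge0.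
  by rewrite expR_le1 mulNr oppr_le0; apply: mulr_ge0 => //; exact: ltW.
rewrite vnormE; apply: le_lt_trans (ler_wsqrtr h1) _.
rewrite sqrtrM; last lra.
rewrite -vnormE.
have -> : eps = Num.sqrt cW * (eps / Num.sqrt cW) by rewrite mulrC -mulrA mulVf ?gt_eqF // mulr1.
by rewrite ltr_pM2l.
Qed.

Lemma attractivity x : is_solution A x ->
  [/\ Z (e_p (x 0)), Z (e_v (x 0)) & Z (e_u (x 0))] ->
  vnorm (x t) @[t --> +oo%R] --> 0%R.
Proof.
move=> H H0.
have b0 := bW0.
set C := Num.sqrt (dot (e_p (x 0)) (e_p (x 0)) + dot (e_v (x 0)) (e_v (x 0)) +
                   cW * dot (e_u (x 0)) (e_u (x 0))).
have C0 : 0 <= C by exact: sqrtr_ge0.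
have hb : forall t, 0 <= t -> vnorm (x t) <= expR (- (bW / 2) * t) * C.
  move=> t t0; rewrite vnormE; apply: sqrt_exp_bound; first exact: Wf0_ge0.
  have -> : 2 * (bW / 2) = bW by field.
  exact: (x_bound H H0 t0).
apply/cvgrPdist_le => eps e0.
have T0 : 0 <= C / (eps * (bW / 2)).
  by apply: divr_ge0 => //; apply: mulr_ge0; [exact: ltW | apply: divr_ge0; [exact: ltW|]].
near=> t.
have tT : C / (eps * (bW / 2)) <= t by near: t; apply: nbhs_pinfty_ge; exact: num_real.
have t0 : 0 <= t by exact: le_trans tT.
rewrite sub0r normrN ger0_norm; last by rewrite vnormE; exact: sqrtr_ge0.
apply: le_trans (hb t t0) _.
set y := bW / 2 * t.
have y0 : 0 <= y by apply: mulr_ge0 => //; apply: divr_ge0; [exact: ltW|].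
have hy : C <= eps * y.
  have eb : 0 < eps * (bW / 2) by apply: mulr_gt0 => //; exact: divr_gt0.
  have := ler_wpM2l (ltW eb) tT.
  have -> : eps * (bW / 2) * (C / (eps * (bW / 2))) = C.
    by rewrite mulrC -mulrA mulVf ?mulr1 // gt_eqF.
  by move=> h; rewrite /y mulrA.
have ey : 1 + y <= expR y := expR_ge1Dx y.
rewrite mulNr expRN -/y.
have epos : 0 < expR y := expR_gt0 y.
rewrite ler_pdivrMl //.
have : eps * (1 + y) <= eps * expR y by apply: ler_wpM2l => //; exact: ltW.
lra.
Unshelve. all: end_near.
Qed.

Lemma is_derive_mulc (h : R -> R) (dh c t : R) : is_derive t 1 h dh ->
  is_derive t 1 (fun s => h s * c) (dh * c).
Proof.
move=> hd; have H := is_deriveM hd (is_derive_cst c t 1).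
apply: (@is_derive_eq _ _ _ (fun s => h s * c) t 1 _ _ H).
by rewrite /cst /= scaler0 add0r /GRing.scale /= mulrC.
Qed.

Lemma sol_of (w : 'cV[R]_m) (h g E : R -> R) : K *m w = lam *: w ->
  (forall t : R, is_derive t 1 h (- (kp * lam) * h t + E t)) ->
  (forall t : R, is_derive t 1 g (- (kp * lam) * g t - ku * lam * E t)) ->
  (forall t : R, is_derive t 1 E (- (ku * lam) * E t)) ->
  is_solution A (fun s => col_mx (h s *: w) (col_mx (g s *: w) (E s *: w))).
Proof.
move=> hKw dh dg dE t i.
set X := fun s => col_mx (h s *: w) (col_mx (g s *: w) (E s *: w)).
have Gw : G *m w = (- lam) *: w by rewrite GE hKw scaleNr.
have Xp : forall s, e_p (X s) = h s *: w by move=> s; rewrite /e_p col_mxKu.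
have Xv : forall s, e_v (X s) = g s *: w by move=> s; rewrite /e_v col_mxKd col_mxKu.
have Xu : forall s, e_u (X s) = E s *: w by move=> s; rewrite /e_u col_mxKd col_mxKd.
have ep : e_p (A *m X t) = (- (kp * lam) * h t + E t) *: w.
  rewrite sys_p Xp Xu -scalemxAr Gw !scalerA scalerDl; congr (_ *: _ + _); ring.
have ev : e_v (A *m X t) = (- (kp * lam) * g t - ku * lam * E t) *: w.
  rewrite sys_v Xv Xu -!scalemxAr Gw !scalerA scalerBl; congr (_ *: _ + _).
    by ring.
  by rewrite -scaleNr; congr (_ *: _); ring.
have eu : e_u (A *m X t) = (- (ku * lam) * E t) *: w.
  by rewrite sys_u Xu -scalemxAr Gw !scalerA; congr (_ *: _); ring.
rewrite -(splitK i); case: (fintype.split i) => [j|j] /=.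
  have -> : (A *m X t) (lshift _ j) 0 = e_p (A *m X t) j 0 by rewrite /e_p [RHS]mxE.
  have -> : (fun s => X s (lshift _ j) 0) = (fun s => h s * w j 0).
    by apply: funext => s; rewrite /X col_mxEu mxE.
  by rewrite ep mxE; exact: is_derive_mulc.
rewrite -(splitK j); case: (fintype.split j) => [k|k] /=.
  have -> : (A *m X t) (rshift _ (lshift _ k)) 0 = e_v (A *m X t) k 0.
    by rewrite /e_v [RHS]mxE [RHS]mxE.
  have -> : (fun s => X s (rshift _ (lshift _ k)) 0) = (fun s => g s * w k 0).
    by apply: funext => s; rewrite /X col_mxEd col_mxEu mxE.
  by rewrite ev mxE; exact: is_derive_mulc.
have -> : (A *m X t) (rshift _ (rshift _ k)) 0 = e_u (A *m X t) k 0.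
  by rewrite /e_u [RHS]mxE [RHS]mxE.
have -> : (fun s => X s (rshift _ (rshift _ k)) 0) = (fun s => E s * w k 0).
  by apply: funext => s; rewrite /X col_mxEd col_mxEd mxE.
by rewrite eu mxE; exact: is_derive_mulc.
Qed.

Lemma Zscale a (w : 'cV[R]_m) : Z w -> Z (a *: w).
Proof. by move=> zw k; rewrite mxE zw mulr0. Qed.

Lemma vnormZ a (w : 'cV[R]_m) : vnorm (a *: w) = `|a| * vnorm w.
Proof.
rewrite !vnormE dotZl dotZr mulrA -expr2 sqrtrM ?sqr_ge0 //.
by rewrite sqrtr_sqr.
Qed.

Lemma is_derive_E (a t : R) : is_derive t 1 (fun s => expR (a * s)) (a * expR (a * t)).
Proof. by apply: is_derive_eq (is_derive_expl a t) _; rewrite mulrC. Qed.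

Lemma is_derive_idmul (E : R -> R) (dE t : R) : is_derive t 1 E dE ->
  is_derive t 1 (fun s => s * E s) (E t + t * dE).
Proof.
move=> hE.
have H := @is_deriveM R R (fun s => s) E t 1 1 dE (is_derive_id t 1) hE.
have H' : is_derive t 1 (fun s : R => s * E s) (t *: dE + E t *: 1) := H.
apply: is_derive_eq H' _.
by rewrite /GRing.scale /= mulr1 addrC.
Qed.

Lemma witness_u : exists2 x, is_solution A x &
  [/\ [/\ Z (e_p (x 0)), Z (e_v (x 0)) & Z (e_u (x 0))], e_u (x 0) != 0 &
      forall t : R, 0 <= t ->
      vnorm (e_u (x t)) = expR (- (ku * lam) * t) * vnorm (e_u (x 0))].
Proof.
have [w [zw wn0 hKw]] := K_eigvec esym dpos eig.
have l0 := lamp.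
pose E s := expR (- (ku * lam) * s).
have dE : forall t : R, is_derive t 1 E (- (ku * lam) * E t) by move=> t; exact: is_derive_E.
suff [h [g [dh dg]]] : exists h g : R -> R,
    (forall t : R, is_derive t 1 h (- (kp * lam) * h t + E t)) /\
    (forall t : R, is_derive t 1 g (- (kp * lam) * g t - ku * lam * E t)).
  exists (fun s => col_mx (h s *: w) (col_mx (g s *: w) (E s *: w))).
    exact: (sol_of hKw dh dg dE).
  rewrite /e_p /e_v /e_u !col_mxKu !col_mxKd !col_mxKu.
  split; first by split; exact: Zscale.
    by rewrite /E mulr0 expR0 scale1r.
  move=> t t0; rewrite !col_mxKd !vnormZ /E mulr0 expR0 normr1 mul1r.
  by rewrite ger0_norm // expR_ge0.
have [ek|nek] := eqVneq kp ku.
  exists (fun s => s * E s); exists (fun s => s * E s * (- (ku * lam))); split => t.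
    apply: is_derive_eq (is_derive_idmul (dE t)) _.
    by rewrite ek; ring.
  apply: is_derive_eq (is_derive_mulc (- (ku * lam)) (is_derive_idmul (dE t))) _.
  by rewrite ek; ring.
have kk : kp - ku != 0 by rewrite subr_eq0.
have kk' : ku - kp != 0 by rewrite subr_eq0 eq_sym.
exists (fun s => E s * ((kp - ku) * lam)^-1); exists (fun s => E s * (ku / (ku - kp))).
split => t.
  apply: is_derive_eq (is_derive_mulc _ (dE t)) _.
  by field; rewrite kk gt_eqF.
apply: is_derive_eq (is_derive_mulc _ (dE t)) _.
by field; rewrite kk'.
Qed.

Lemma witness_pv : exists2 x, is_solution A x &
  [/\ [/\ Z (e_p (x 0)), Z (e_v (x 0)) & Z (e_u (x 0))], e_u (x 0) = 0,
      (e_p (x 0) != 0) || (e_v (x 0) != 0) &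
      forall t : R, 0 <= t ->
      vnorm2 (e_p (x t)) (e_v (x t)) = expR (- (kp * lam) * t) * vnorm2 (e_p (x 0)) (e_v (x 0))].
Proof.
have [w [zw wn0 hKw]] := K_eigvec esym dpos eig.
pose h s := expR (- (kp * lam) * s).
pose z (s : R) := (0 : R).
have dz : forall t : R, is_derive t 1 z 0 by move=> t; exact: is_derive_cst.
have dh : forall t : R, is_derive t 1 h (- (kp * lam) * h t + z t).
  by move=> t; apply: is_derive_eq (is_derive_E _ t) _; rewrite /z addr0.
have dg : forall t : R, is_derive t 1 z (- (kp * lam) * z t - ku * lam * z t).
  by move=> t; apply: is_derive_eq (dz t) _; rewrite /z !mulr0 subr0.
have dE : forall t : R, is_derive t 1 z (- (ku * lam) * z t).
  by move=> t; apply: is_derive_eq (dz t) _; rewrite /z mulr0.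
exists (fun s => col_mx (h s *: w) (col_mx (z s *: w) (z s *: w))).
  exact: (sol_of hKw dh dg dE).
rewrite /e_p /e_v /e_u !col_mxKu !col_mxKd !col_mxKu /z !scale0r.
split.
- by split; [exact: Zscale | move=> k; rewrite mxE | move=> k; rewrite mxE].
- by [].
- by rewrite /h mulr0 expR0 scale1r wn0.
move=> t t0; rewrite !col_mxKu !col_mxKd !col_mxKu !vnorm2E !dot0l !addr0 -!vnormE !vnormZ /h mulr0 expR0 normr1 mul1r.
by rewrite ger0_norm // expR_ge0.
Qed.

End PartE.

End Helpers.

(* N = n.+1 agents, indexed by 'I_n.+1 ; leader l *)
Theorem proposition1 (R : realType) (n d : nat) (e : rel 'I_n.+1) (l : 'I_n.+1)
  (kp ku lam : R) :
  symmetric e -> irreflexive e -> (forall i j, connect e i j) ->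
  (0 < d)%N -> 0 < kp -> 0 < ku ->
  let L := laplacian (adjacency R e) in
  let G := Gmat d l L in
  let A := sysmat kp ku G in
  let S := fun x : 'cV[R]_(n.+1 * d + (n.+1 * d + n.+1 * d)) =>
      [/\ block_zero l (e_p x), block_zero l (e_v x) & block_zero l (e_u x)] in
  (* lam = lambda_{2,l} = min sigma(M_l) *)
  eigenvalue (Mmat l L) lam -> (forall a, eigenvalue (Mmat l L) a -> lam <= a) ->
  [/\
    (* Lyapunov stability of the origin on S *)
    (forall eps : R, 0 < eps -> exists2 delta : R, 0 < delta &
       forall x, is_solution A x -> S (x 0) -> vnorm (x 0) < delta ->
         forall t : R, 0 <= t -> vnorm (x t) < eps),
    (* global attractivity on S *)
    (forall x, is_solution A x -> S (x 0) ->
       vnorm (x t) @[t --> +oo%R] --> 0%R),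
    (* e_u converges at rate k_u lam, and this rate is attained *)
    (forall x, is_solution A x -> S (x 0) -> forall t : R, 0 <= t ->
       vnorm (e_u (x t)) <= expR (- (ku * lam) * t) * vnorm (e_u (x 0)))
    /\ (exists2 x, is_solution A x &
         [/\ S (x 0), e_u (x 0) != 0 & forall t : R, 0 <= t ->
           vnorm (e_u (x t)) = expR (- (ku * lam) * t) * vnorm (e_u (x 0))]),
    (* the (e_p, e_v) dynamics (unforced part, i.e. when e_u = 0) converge
       at rate k_p lam, and this rate is attained *)
    (forall x, is_solution A x -> S (x 0) -> e_u (x 0) = 0 -> forall t : R, 0 <= t ->
       vnorm2 (e_p (x t)) (e_v (x t))
         <= expR (- (kp * lam) * t) * vnorm2 (e_p (x 0)) (e_v (x 0)))
    &
    (exists2 x, is_solution A x &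
         [/\ S (x 0), e_u (x 0) = 0, (e_p (x 0) != 0) || (e_v (x 0) != 0) &
           forall t : R, 0 <= t ->
           vnorm2 (e_p (x t)) (e_v (x t))
             = expR (- (kp * lam) * t) * vnorm2 (e_p (x 0)) (e_v (x 0))])].
Proof.
move=> esym _ conn dpos kp0 ku0 L G A S eig lmin.
split.
- by move=> eps e0; apply: (Helpers.stability d esym conn kp0 ku0 eig lmin e0).
- by move=> x H H0; apply: (Helpers.attractivity esym conn kp0 ku0 eig lmin H H0).
- split.
    by move=> x H H0 t t0; apply: (Helpers.u_norm_rate esym ku0 lmin H H0 t0).
  by apply: (Helpers.witness_u kp ku esym conn dpos eig).
- by move=> x H H0 u0 t t0; apply: (Helpers.pv_norm_rate esym kp0 ku0 lmin H H0 u0 t0).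
- by apply: (Helpers.witness_pv kp ku esym dpos eig).
Qed.
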